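(* Let $X$ and $Y$ be Hausdorff topological spaces and let $\varphi: Y \to X$ be continuous. Let $Z = Y \dot\cup_\varphi X$ be the set-theoretic disjoint union of $X$ and $Y$ with the topology generated by the base consisting of (a) all open subsets of $Y$, and (b) all sets of the form $[U,K] := U \cup (\varphi^{-1}(U) \setminus K)$, where $U$ is open in $X$ and $K$ is a compact subset of $Y$. Then: \begin{enumerate} \item $X$ is closed in $Z$, $Y$ is open in $Z$, and both $X$ and $Y$ inherit their original topologies as subspaces of $Z$. \item If $Y$ is locally compact, then $Z$ is Hausdorff. \item If $X$ is compact, then $Z$ is compact. \item If $X$ and $Y$ are first countable, $X$ is compact, $Y$ is locally compact, and $\varphi^{-1}(x)$ is compact for each $x \in X$, then $Z$ is first countable. \item If $X$ and $Y$ are zero-dimensional, $X$ is compact, and $Y$ is locally compact, then $Z$ is zero-dimensional. \item If $X$ is second countable and $Y^\omega$ is hereditarily separable, then $Z^\omega$ is hereditarily separable. \end{enumerate}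
   Context: A space is hereditarily separable if every subspace of it is separable. $Y^\omega$ and $Z^\omega$ denote countable Tychonoff powers. *)

(* Defs.v *)
From HB Require Import structures.
From mathcomp Require Import all_boot all_order all_algebra.
From mathcomp Require Import all_classical all_reals all_analysis.
Set Implicit Arguments. Unset Strict Implicit. Unset Printing Implicit Defensive.
Import Order.TTheory GRing.Theory Num.Theory.
Local Open Scope classical_set_scope.

Definition locally_compact_space (T : topologicalType) : Prop :=
  forall x : T, exists K : set T, compact K /\ nbhs x K.

Definition first_countable (T : topologicalType) : Prop :=
  forall x : T, exists B : set (set T),
    [/\ countable B, (forall U, B U -> nbhs x U) &
        (forall U, nbhs x U -> exists2 V, B V & V `<=` U)].

Definition zero_dim (T : topologicalType) : Prop :=
  forall (x : T) (U : set T), nbhs x U ->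
    exists V : set T, [/\ clopen V, V x & V `<=` U].

(* A subspace A is separable: it has a countable subset dense in A
   (the closure of D in the subspace A is closure D `&` A). *)
Definition separable_subspace (T : topologicalType) (A : set T) : Prop :=
  exists D : set T, [/\ D `<=` A, countable D & A `<=` closure D].

Definition hereditarily_separable (T : topologicalType) : Prop :=
  forall A : set T, separable_subspace A.

Notation power_omega T := {ptws nat -> T}.

(* the carrier: disjoint union of Y and X; indexed by phi since the
   topology depends on phi *)
Definition glue_type (X Y : topologicalType) (phi : Y -> X) : Type :=
  (Y + X)%type.

Section Glue.
Context (X Y : topologicalType) (phi : Y -> X).

HB.instance Definition _ := Choice.on (glue_type phi).

Definition glueY : Y -> glue_type phi := inl.
Definition glueX : X -> glue_type phi := inr.

Definition glue_bracket (U : set X) (K : set Y) : set (glue_type phi) :=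
  glueX @` U `|` glueY @` (phi @^-1` U `\` K).

Definition glue_base : set (set (glue_type phi)) :=
  [set W | (exists V : set Y, open V /\ W = glueY @` V) \/
           (exists (U : set X) (K : set Y),
               [/\ open U, compact K & W = glue_bracket U K])].

HB.instance Definition _ :=
  @isSubBaseTopological.Build (glue_type phi) (set (glue_type phi)) glue_base id.

End Glue.

(* Main.v *)
Require Import Defs.
From HB Require Import structures.
From mathcomp Require Import all_boot all_order all_algebra.
From mathcomp Require Import all_classical all_reals all_analysis.
Local Open Scope classical_set_scope.

Lemma bigcap_seq_ind (T : Type) (S : set (set T)) (P : set T -> Prop) :
  P setT -> (forall A C, S A -> P C -> P (A `&` C)) ->
  forall s : seq (set T), {subset s <= S} -> P (\bigcap_(i in [set x | x \in s]) i).
Proof.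
move=> PT PI; elim=> [|a s IH] sS.
  have -> : \bigcap_(i in [set x | x \in [::]]) i = @setT T.
    by apply/seteqP; split => // t _ i /=; rewrite in_nil.
  exact: PT.
have -> : \bigcap_(i in [set x | x \in a :: s]) i =
   a `&` \bigcap_(i in [set x | x \in s]) i.
  apply/seteqP; split => t /=.
    move=> H; split; first by apply: H; rewrite /= mem_head.
    by move=> i /= Is; apply: H; rewrite /= in_cons Is orbT.
  by move=> [aT H] i /=; rewrite in_cons => /orP[/eqP->//|/H].
apply: PI; first by have := sS a (mem_head _ _); rewrite inE.
by apply: IH => i Is; apply: sS; rewrite in_cons Is orbT.
Qed.

Lemma finI_ind (T : Type) (S : set (set T)) (P : set T -> Prop) :
  P setT -> (forall A C, S A -> P C -> P (A `&` C)) ->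
  forall A, finI_from S id A -> P A.
Proof.
move=> PT PI A [D sD <-].
exact: (@bigcap_seq_ind T S P PT PI (finmap.enum_fset D) sD).
Qed.


Section GlueBasics.
Context (X Y : topologicalType) (phi : Y -> X).
Local Notation Z := (glue_type phi).
Local Notation gX := (glueX phi).
Local Notation gY := (glueY phi).
Local Notation B := (@glue_base X Y phi).
Local Notation br := (@glue_bracket X Y phi).

Lemma base_open (A : set Z) : B A -> open A.
Proof.
move=> BA; exists [set A]; last by rewrite bigcup_set1.
by move=> _ ->; exact: finI_from1.
Qed.

Lemma open_gY (V : set Y) : open V -> open (gY @` V).
Proof. by move=> oV; apply: base_open; left; exists V. Qed.

Lemma open_br (U : set X) (K : set Y) : open U -> compact K -> open (br U K).
Proof. by move=> oU cK; apply: base_open; right; exists U, K. Qed.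

Lemma nbhs_finI (z : Z) (W : set Z) : nbhs z W ->
  exists A, [/\ finI_from B id A, A z & A `<=` W].
Proof.
rewrite nbhsE => -[Op [[D sD eO] Oz] OW].
move: Oz; rewrite -eO => -[A DA Az]; exists A; split => //; first exact: sD.
by move=> t At; apply: OW; rewrite -eO; exists A.
Qed.

Lemma gX_inj : injective gX. Proof. by move=> a b []. Qed.
Lemma gY_inj : injective gY. Proof. by move=> a b []. Qed.

Lemma gX_br (x : X) U K : br U K (gX x) <-> U x.
Proof.
split; last by move=> Ux; left; exists x.
by case=> -[x' Ux' e] //; move/gX_inj: e => <-.
Qed.

Lemma gY_br (y : Y) U K : br U K (gY y) <-> (U (phi y) /\ ~ K y).
Proof.
split; last by move=> H; right; exists y.
by case=> -[y' H e] //; move/gY_inj: e => <-.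
Qed.

Lemma gX_gY (x : X) V : ~ (gY @` V) (gX x).
Proof. by case. Qed.

Lemma gY_gY (y : Y) V : (gY @` V) (gY y) <-> V y.
Proof. by split => [[y' Vy' /gY_inj <-]|Vy]; [|exists y]. Qed.

Lemma nbhsX (x : X) (W : set Z) : nbhs (gX x) W ->
  exists U K, [/\ open U, U x, compact K & br U K `<=` W].
Proof.
move=> /nbhs_finI [A [fA Ax AW]].
suff [U [K [oU Ux cK sUA]]] : exists U K, [/\ open U, U x, compact K & br U K `<=` A].
  by exists U, K; split => //; apply: subset_trans AW.
move: A fA Ax {AW}; apply: finI_ind.
  by move=> _; exists setT, set0; split => //; [exact: openT|exact: compact0].
move=> A C [[V [oV ->]]|[U1 [K1 [oU1 cK1 ->]]]] PC [Ax Cx].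
  by case: (@gX_gY x V Ax).
have [U2 [K2 [oU2 U2x cK2 sC]]] := PC Cx.
exists (U1 `&` U2), (K1 `|` K2); split.
- exact: openI.
- by split => //; move/gX_br: Ax.
- exact: compactU.
move=> z [[x' [U1x' U2x'] <-]|[y [[U1y U2y] nK] <-]]; split.
- by apply/gX_br.
- by apply: sC; apply/gX_br.
- by apply/gY_br; split => // ?; apply: nK; left.
- by apply: sC; apply/gY_br; split => // ?; apply: nK; right.
Qed.

Lemma gX_cont : continuous gX.
Proof.
move=> x W /= /nbhs_finI [A [fA Ax AW]].
apply: (@filterS _ _ _ (gX @^-1` A)); first by move=> t /AW.
move: A fA Ax {AW}; apply: finI_ind; first by move=> _; exact: filterT.
move=> A C [[V [oV ->]]|[U1 [K1 [oU1 cK1 ->]]]] PC [Ax Cx].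
  by case: (@gX_gY x V Ax).
rewrite preimage_setI; apply: filterI; last exact: PC.
apply: (@filterS _ _ _ U1); first by move=> t U1t; apply/gX_br.
by apply: open_nbhs_nbhs; split => //; move/gX_br: Ax.
Qed.

Lemma gY_cont : hausdorff_space Y -> continuous phi -> continuous gY.
Proof.
move=> hY cphi y W /= /nbhs_finI [A [fA Ay AW]].
apply: (@filterS _ _ _ (gY @^-1` A)); first by move=> t /AW.
move: A fA Ay {AW}; apply: finI_ind; first by move=> _; exact: filterT.
move=> A C [[V [oV ->]]|[U1 [K1 [oU1 cK1 ->]]]] PC [Ay Cy];
  rewrite preimage_setI; apply: filterI; try exact: PC.
  apply: (@filterS _ _ _ V); first by move=> t Vt; apply/gY_gY.
  by apply: open_nbhs_nbhs; split => //; move/gY_gY: Ay.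
apply: (@filterS _ _ _ (phi @^-1` U1 `&` ~` K1)).
  by move=> t [? ?]; apply/gY_br.
apply: open_nbhs_nbhs; split; last by move/gY_br: Ay => [].
apply: openI; first by move/continuousP: cphi; apply.
by rewrite openC; exact: compact_closed.
Qed.

End GlueBasics.


Lemma compact_fincover (T : topologicalType) (K : set T) (G : T -> set T) :
  compact K -> (forall y, K y -> nbhs y (G y)) ->
  exists s : seq T, K `<=` [set t | exists2 y, (y \in s /\ K y) & G y t].
Proof.
move=> /compact_near_coveringP cK nG.
pose F := filter_from [set: seq T] (fun s0 : seq T => [set s : seq T | {subset s0 <= s}]).
have FF : Filter F.
  apply: filter_from_filter; first by exists [::].
  move=> s1 s2 _ _; exists (s1 ++ s2) => // s H; split => y Hy; apply: H;
    by rewrite mem_cat Hy ?orbT.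
have := cK (seq T) F (fun s t => exists2 y, (y \in s /\ K y) & G y t) FF.
case.
- move=> x Kx; exists (G x, [set s : seq T | {subset [:: x] <= s}]).
    split => //=; first exact: nG.
    by exists [:: x].
  move=> [t s] /= [Gt sx]; exists x => //; split => //; apply: sx; exact: mem_head.
- move=> s0 _ H; exists s0; apply: H => //.
Qed.


Definition cyl_sub (T : topologicalType) : set (set {ptws nat -> T}) :=
  [set A | exists n (O : set T), open O /\ A = (fun g : nat -> T => g n) @^-1` O].

Lemma ptws_nbhs (T : topologicalType) (f : {ptws nat -> T}) (W : set {ptws nat -> T}) :
  nbhs f W -> exists A, [/\ finI_from (@cyl_sub T) id A, A f & A `<=` W].
Proof.
rewrite nbhsE => -[Op [[D sD eO] Oz] OW].
move: Oz; rewrite -eO => -[A DA Az]; exists A; split => //; last first.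
  by move=> t At; apply: OW; rewrite -eO; exists A.
have [E sE <-] := sD _ DA.
exists E => // B /sE; rewrite !inE => -[n _ [Ob oO <-]].
by exists n, Ob.
Qed.

Lemma ptws_proj_nbhs (T : topologicalType) (w : {ptws nat -> T}) n (V : set T) :
  nbhs (w n) V -> nbhs w [set g : {ptws nat -> T} | V (g n)].
Proof. exact: (@proj_continuous nat (fun _ => T) n w V). Qed.


Section P12.
Context (X Y : topologicalType) (phi : Y -> X).
Local Notation Z := (glue_type phi).
Local Notation gX := (glueX phi).
Local Notation gY := (glueY phi).
Local Notation B := (@glue_base X Y phi).
Local Notation br := (@glue_bracket X Y phi).

Lemma part1 : hausdorff_space Y -> continuous phi ->
  [/\ closed (range gX), open (range gY),
       (forall A : set X,
          open A <-> exists V : set Z, open V /\ A = gX @^-1` V) &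
       (forall A : set Y,
          open A <-> exists V : set Z, open V /\ A = gY @^-1` V)].
Proof.
move=> hY cphi.
have oY : open (range gY) by apply: open_gY; exact: openT.
split => //.
- have -> : range gX = ~` range gY.
    apply/seteqP; split => [z [x _ <-] [y _]|] //.
    by case=> [y /(_ (ex_intro2 _ _ y I erefl))|x _] //; exists x.
  by rewrite closedC.
- move=> A; split => [oA|[V [oV ->]]].
    exists (br A set0); split; first by apply: open_br => //; exact: compact0.
    by apply/seteqP; split => x /= H; [apply/gX_br|move/gX_br: H].
  by move/continuousP: (@gX_cont X Y phi); apply.
- move=> A; split => [oA|[V [oV ->]]].
    exists (gY @` A); split; first exact: open_gY.
    by apply/seteqP; split => x /= H; [apply/gY_gY|move/gY_gY: H].
  by move/continuousP: (@gY_cont X Y phi hY cphi); apply.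
Qed.

Lemma part2 : hausdorff_space X -> hausdorff_space Y ->
  locally_compact_space Y -> hausdorff_space Z.
Proof.
move=> hX hY lcY; rewrite open_hausdorff.
have Hsep : forall p q : Z, (exists U V : set Z, [/\ open U, open V, U p, V q &
    U `&` V = set0]) -> exists2 AB : set_predType Z * set_predType Z,
     p \in AB.1 /\ q \in AB.2 &
     [/\ open AB.1, open AB.2 & AB.1 `&` AB.2 == set0].
  move=> p q [U [V [oU oV Up Vq UV]]]; exists (U, V) => /=.
    by rewrite !inE.
  by split => //; apply/eqP.
have HYX : forall y x, exists U V : set Z, [/\ open U, open V, U (gY y), V (gX x) &
    U `&` V = set0].
  move=> y x; have [K [cK]] := lcY y; rewrite nbhsE => -[Op [oO Oy] OK].
  exists (gY @` Op), (br setT K); split.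
  - exact: open_gY.
  - by apply: open_br => //; exact: openT.
  - by apply/gY_gY.
  - by apply/gX_br.
  apply/seteqP; split => // z [[y' Oy' <-]] /gY_br [_]; apply; exact: OK.
move=> [y1|x1] [y2|x2] pq; apply: Hsep.
- have : y1 != y2 by apply: contra_neq pq => ->.
  move: (hY); rewrite open_hausdorff => /[apply] -[[U V] /= [U1 V2] [oU oV /eqP UV]].
  exists (gY @` U), (gY @` V); split; try exact: open_gY.
  + by apply/gY_gY; rewrite -inE.
  + by apply/gY_gY; rewrite -inE.
  apply/seteqP; split => // z [[y Uy <-]] /gY_gY Vy.
  by have : (U `&` V) y by []; rewrite UV.
- exact: HYX.
- have [U [V [oU oV Ux Vy UV]]] := HYX y2 x1.
  by exists V, U; split => //; rewrite setIC.
- have : x1 != x2 by apply: contra_neq pq => ->.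
  move: (hX); rewrite open_hausdorff => /[apply] -[[U V] /= [U1 V2] [oU oV /eqP UV]].
  exists (br U set0), (br V set0); split; try (apply: open_br => //; exact: compact0).
  + by apply/gX_br; rewrite -inE.
  + by apply/gX_br; rewrite -inE.
  apply/seteqP; split => // z [].
  case=> [[x Ux <-] /gX_br Vx|[y [Uy _] <-] /gY_br [Vy _]].
    by have : (U `&` V) x by []; rewrite UV.
  by have : (U `&` V) (phi y) by []; rewrite UV.
Qed.
End P12.


Section P3.
Context (X Y : topologicalType) (phi : Y -> X).
Local Notation Z := (glue_type phi).
Local Notation gX := (glueX phi).
Local Notation gY := (glueY phi).
Local Notation br := (@glue_bracket X Y phi).

Lemma part3 : hausdorff_space Y -> continuous phi ->
  compact [set: X] -> compact [set: Z].
Proof.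
move=> hY cphi cX; rewrite compact_ultra => F UF _.
have [[y Fy]|nY] := pselect (exists y, F --> gY y); first by exists (gY y).
have cgY := @gY_cont X Y phi hY cphi.
have C1 : forall K, compact K -> F (~` (gY @` K)).
  move=> K cK; have [FK|//] := in_ultra_setVsetC (gY @` K) UF.
  exfalso; apply: nY.
  pose G := [set Bs : set Y | F (gY @` Bs)].
  have PG : ProperFilter G.
    apply: Build_ProperFilter_ex.
      move=> Bs GB; have [_ [y Bsy _]] := @filter_ex _ F (@ultra_proper _ _ UF) _ GB.
      by exists y.
    split.
    - by apply: (@filterS _ F _ _ _ _ FK) => _ [y _ <-]; exists y.
    - move=> P Q GP GQ; apply: (@filterS _ F _ _ _ _ (@filterI _ F _ _ _ GP GQ)).
      by move=> _ [[y Py <-] [y' Qy' /gY_inj e]]; exists y => //; split => //; rewrite -e.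
    - move=> P Q PQ GP; apply: (@filterS _ F _ _ _ _ GP).
      by move=> _ [y /PQ Qy <-]; exists y.
  have [y [Ky cly]] := cK G PG FK.
  exists y; suff : cluster F (gY y) by rewrite ultra_cvg_clusterE.
  move=> A W FA nW.
  have GA : G (gY @^-1` A).
    apply: (@filterS _ F _ _ _ _ (filterI FA FK)) => z [Az [y' _ e]]; exists y' => //=.
    by rewrite e.
  have [t [At Wt]] := cly _ _ GA (cgY y W nW).
  by exists (gY t).
pose r (z : Z) : X := match z with inl y => phi y | inr x => x end.
have [x [_ clx]] := cX (r @ F) (fmap_proper_filter r (@ultra_proper _ _ UF)) filterT.
exists (gX x); split => // W /nbhsX [U [K [oU Ux cK sW]]].
apply: (@filterS _ F _ _ _ sW).
have [//|FC] := in_ultra_setVsetC (br U K) UF.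
have FnU : (r @ F) (~` U).
  apply: (@filterS _ F _ _ _ _ (filterI FC (C1 K cK))) => -[y|x'] /= [nb nK].
    move=> Uy; apply: nb; apply/gY_br; split => // Ky; apply: nK; by exists y.
  by move=> Ux'; apply: nb; apply/gX_br.
have [t [nUt Ut]] := clx _ _ FnU (open_nbhs_nbhs (conj oU Ux)).
by case: nUt.
Qed.
End P3.


Lemma compact_nbhd (T : topologicalType) (Fb : set T) :
  locally_compact_space T -> compact Fb ->
  exists O L, [/\ open O, compact L, Fb `<=` O & O `<=` L].
Proof.
move=> lc cF.
have /choice [Kf HK] := lc.
have [s Hs] := @compact_fincover T Fb (fun y => (Kf y)°) cF
   (fun y _ => nbhs_interior (HK y).2).
exists (\bigcup_(y in [set` s]) (Kf y)°), (\bigcup_(y in [set` s]) Kf y); split.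
- apply: bigcup_open => y _; exact: open_interior.
- rewrite bigcup_seq; apply: bigsetU_compact => y _; exact: (HK y).1.
- by move=> t /Hs [y [ys _] Gt]; exists y.
- by move=> t [y ys It]; exists y => //; exact: interior_subset.
Qed.

Section P4.
Context (X Y : topologicalType) (phi : Y -> X).
Local Notation Z := (glue_type phi).
Local Notation gX := (glueX phi).
Local Notation gY := (glueY phi).
Local Notation br := (@glue_bracket X Y phi).

Lemma part4 : hausdorff_space X -> hausdorff_space Y -> continuous phi ->
  first_countable X -> first_countable Y ->
  locally_compact_space Y -> (forall x : X, compact (phi @^-1` [set x])) ->
  first_countable Z.
Proof.
move=> hX hY cphi fX fY lcY cF; have cgY := @gY_cont X Y phi hY cphi.
case=> [y|x].
  have [By [cBy nBy sBy]] := fY y.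
  exists [set gY @` N | N in By]; split.
  - exact: (card_le_trans (card_image_le _ _) cBy).
  - move=> _ [N BN <-]; have := nBy _ BN; rewrite nbhsE => -[Op [oO Oy] ON].
    apply: (@filterS _ _ _ (gY @` Op)).
      by move=> _ [t Ot <-]; exists t => //; exact: ON.
    by apply: open_nbhs_nbhs; split; [exact: open_gY|exists y].
  - move=> W nW; have [N BN NW] := sBy _ (cgY y W nW).
    by exists (gY @` N); [exists N|move=> _ [t /NW Wt <-]].
have [Bx [cBx nBx sBx]] := fX x.
have [Op [L [oO cL FO OL]]] := @compact_nbhd Y _ lcY (cF x).
exists [set br N° L | N in Bx]; split.
- exact: (card_le_trans (card_image_le _ _) cBx).
- move=> _ [N BN <-]; apply: open_nbhs_nbhs; split.
    by apply: open_br => //; exact: open_interior.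
  by apply/gX_br; exact: nBx _ BN.
move=> W /nbhsX [U [K [oU Ux cK sW]]].
pose C := phi @` (K `&` ~` Op).
have cC : closed C.
  apply: compact_closed hX _; apply: continuous_compact.
    by apply: continuous_subspaceT => t; exact: cphi.
  by apply: compact_closedI cK _; rewrite closedC.
have nCx : ~ C x by move=> [k [Kk nOk] ek]; apply: nOk; apply: FO.
have nUC : nbhs x (U `&` ~` C).
  apply: open_nbhs_nbhs; split => //; apply: openI => //; by rewrite openC.
have [N BN NUC] := sBx _ nUC.
exists (br N° L); first by exists N.
apply: subset_trans sW => z [[x' Nx' <-]|[y [Ny nLy] <-]].
  by apply/gX_br; apply: (NUC _ (interior_subset Nx')).1.
have [Uy nCy] := NUC _ (interior_subset Ny).
apply/gY_br; split => // Ky; apply: nCy; exists y => //; split => // Oy.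
by apply: nLy; apply: OL.
Qed.
End P4.


Lemma compact_open_cover (T : topologicalType) (K : set T) :
  hausdorff_space T -> locally_compact_space T -> zero_dim T -> compact K ->
  exists C, [/\ open C, compact C & K `<=` C].
Proof.
move=> hT lc zd cK.
have HV : forall y : T, exists V : set T, open V /\ compact V /\ V y.
  move=> y; have [Ky [cKy nKy]] := lc y.
  have [V [[oV clV] Vy VK]] := zd y Ky nKy.
  by exists V; split => //; split => //; exact: subclosed_compact clV cKy VK.
have /choice [Vf HV'] := HV.
have [s Hs] := @compact_fincover T K Vf cK
   (fun y _ => open_nbhs_nbhs (conj (HV' y).1 (HV' y).2.2)).
exists (\bigcup_(y in [set` s]) Vf y); split.
- by apply: bigcup_open => y _; exact: (HV' y).1.
- rewrite bigcup_seq; apply: bigsetU_compact => y _; exact: (HV' y).2.1.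
- by move=> t /Hs [y [ys _] Gt]; exists y.
Qed.

Section P5.
Context (X Y : topologicalType) (phi : Y -> X).
Local Notation Z := (glue_type phi).
Local Notation gX := (glueX phi).
Local Notation gY := (glueY phi).
Local Notation br := (@glue_bracket X Y phi).

Lemma part5 : hausdorff_space X -> hausdorff_space Y -> continuous phi ->
  zero_dim X -> zero_dim Y -> locally_compact_space Y -> zero_dim Z.
Proof.
move=> hX hY cphi zX zY lcY; have cgY := @gY_cont X Y phi hY cphi.
case=> [y|x] W nW.
  have [K [cK nK]] := lcY y.
  have nW' : nbhs y (gY @^-1` W) := cgY y W nW.
  have [V [[oV clV] Vy VWK]] := zY y _ (filterI nW' nK).
  exists (gY @` V); split.
  - split; first exact: open_gY.
    have -> : gY @` V = ~` br setT V.
      apply/seteqP; split => [_ [t Vt <-] /gY_br [_]|[t|x']]; first by apply.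
        by move=> H; exists t => //; apply: contrapT => nVt; apply: H; apply/gY_br.
      by move=> H; exfalso; apply: H; apply/gX_br.
    rewrite closedC; apply: open_br; first exact: openT.
    by apply: subclosed_compact clV cK _ => t /VWK [].
  - by exists y.
  - by move=> _ [t /VWK [Wt _] <-].
have [U [K [oU Ux cK sW]]] := @nbhsX X Y phi x W nW.
have [C [[oC clC] Cx CU]] := zX x U (open_nbhs_nbhs (conj oU Ux)).
have [Kc [oKc cKc KKc]] := @compact_open_cover Y K hY lcY zY cK.
exists (br C Kc); split.
- split; first exact: open_br.
  have -> : br C Kc = ~` (br (~` C) set0 `|` gY @` (Kc `&` phi @^-1` C)).
    apply/seteqP; split.
      move=> z bz [bz'|[t [Kct Ct] et]].
        case: z bz bz' => [t|x'].
          by move=> /gY_br [Ct _] /gY_br [nCt _].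
        by move=> /gX_br Cx' /gX_br.
      by move: bz; rewrite -et => /gY_br [_]; apply.
    case=> [t|x'] H0.
      have H : ~ (br (~` C) set0 `|` gY @` (Kc `&` phi @^-1` C)) (gY t) := H0.
      have Ct : C (phi t).
        by apply: contrapT => nCt; apply: (H); left; apply/gY_br; split.
      apply/gY_br; split => // Kct.
      by apply: (H); right; exists t.
    have H : ~ (br (~` C) set0 `|` gY @` (Kc `&` phi @^-1` C)) (gX x') := H0.
    by apply/gX_br; apply: contrapT => nCx'; apply: H; left; apply/gX_br.
  rewrite closedC; apply: openU.
    by apply: open_br; [rewrite openC|exact: compact0].
  apply: open_gY; apply: openI => //.
  by move/continuousP: cphi; apply.
- by apply/gX_br.
- apply: subset_trans sW => z [[x' Cx' <-]|[t [Ct nKct] <-]].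
    by apply/gX_br; exact: CU.
  by apply/gY_br; split; [exact: CU|move=> /KKc].
Qed.
End P5.


Lemma countableU T (A B : set T) : countable A -> countable B -> countable (A `|` B).
Proof.
move=> cA cB.
have -> : A `|` B = \bigcup_(b in [set: bool]) (if b then A else B).
  apply/seteqP; split => [t [At|Bt]|t [[] _]]; [by exists true|by exists false|by left|by right].
by apply: bigcup_countable => [|[] _ //]; exact: countableP.
Qed.

Lemma finI_setT (I : choiceType) T (D : set I) (f : I -> set T) : finI_from D f setT.
Proof. by exists (finmap.fset0) => //; rewrite set_fset0 bigcap_set0. Qed.

Section P6.
Context (X Y : topologicalType) (phi : Y -> X).
Local Notation Z := (glue_type phi).
Local Notation gX := (glueX phi).
Local Notation gY := (glueY phi).
Local Notation br := (@glue_bracket X Y phi).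
Local Notation PZ := {ptws nat -> Z}.
Local Notation PY := {ptws nat -> Y}.

Definition cylX n (b : set X) : set PZ := [set g | (gX @` b) (g n)].
Definition cylY n : set PZ := [set g | range gY (g n)].
Definition D0 (Bs : set (set X)) : set (set PZ) :=
  \bigcup_(n in [set: nat]) ([set cylY n] `|` [set cylX n b | b in Bs]).
Definition psi (y0 : Y) (a : PZ) : PY :=
  fun n => match a n with inl y => y | inr _ => y0 end.

Lemma D0_countable Bs : countable Bs -> countable (D0 Bs).
Proof.
move=> cBs; apply: bigcup_countable; first exact: countableP.
move=> n _; apply: countableU; first exact: countable1.
exact: (card_le_trans (card_image_le _ _) cBs).
Qed.

Lemma key (Bs : set (set X)) (y0 : Y) :
  hausdorff_space Y -> continuous phi -> basis Bs ->
  forall (a : PZ) (W : set PZ), nbhs a W ->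
  exists G, [/\ finI_from (D0 Bs) id G, G a &
    exists N : set PY, nbhs (psi y0 a) N /\
       forall d, G d -> N (psi y0 d) -> W d].
Proof.
move=> hY cphi [_ BsB] a W /ptws_nbhs [A [fA Aa AW]].
have cgY := @gY_cont X Y phi hY cphi.
suff [G [fG Ga [N [nN HN]]]] : exists G, [/\ finI_from (D0 Bs) id G, G a &
    exists N : set PY, nbhs (psi y0 a) N /\ forall d, G d -> N (psi y0 d) -> A d].
  exists G; split => //; exists N; split => // d Gd Nd; exact: AW (HN d Gd Nd).
move: A fA Aa {AW}; apply: finI_ind.
  move=> _; exists setT; split => //; first exact: finI_setT.
  by exists setT; split => //; exact: filterT.
move=> Ee C [n [Ob [oO ->]]] PC [Ea Ca].
have [G2 [fG2 G2a [N2 [nN2 HN2]]]] := PC Ca.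
suff [G1 [fG1 G1a [N1 [nN1 HN1]]]] : exists G, [/\ finI_from (D0 Bs) id G, G a &
    exists N : set PY, nbhs (psi y0 a) N /\ forall d, G d -> N (psi y0 d) -> Ob (d n)].
  exists (G1 `&` G2); split; [exact: finI_fromI|by split|].
  exists (N1 `&` N2); split; first exact: filterI.
  by move=> d [G1d G2d] [N1d N2d]; split; [exact: HN1|exact: HN2].
move: Ea => /=.
have psiE : forall d : PZ, forall y, d n = gY y -> psi y0 d n = y.
  by move=> d y e; rewrite /psi e.
case E: (a n) => [y|x] Oan.
  exists (cylY n); split.
  - by apply: finI_from1; exists n => //; left.
  - by exists y.
  exists [set g : PY | (gY @^-1` Ob) (g n)]; split.
    apply: ptws_proj_nbhs; rewrite (psiE a y E).
    apply: open_nbhs_nbhs; split => //.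
    by move/continuousP: cgY; apply.
  by move=> d [y' _ e] /=; rewrite (psiE d y' (esym e)) e.
have [U [K [oU Ux cK sO]]] := @nbhsX X Y phi x Ob (open_nbhs_nbhs (conj oO Oan)).
have [b [Bsb bx] bU] := BsB x U (open_nbhs_nbhs (conj oU Ux)).
exists (cylX n b); split.
- by apply: finI_from1; exists n => //; right; exists b.
- by exists x.
exists setT; split; first exact: filterT.
move=> d [x' bx' e] _; rewrite -e; apply: sO; apply/gX_br; exact: bU.
Qed.

Lemma key0 (Bs : set (set X)) : (Y -> False) -> basis Bs ->
  forall (a : PZ) (W : set PZ), nbhs a W ->
  exists G, [/\ finI_from (D0 Bs) id G, G a & G `<=` W].
Proof.
move=> nY [_ BsB] a W /ptws_nbhs [A [fA Aa AW]].
suff [G [fG Ga GA]] : exists G, [/\ finI_from (D0 Bs) id G, G a & G `<=` A].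
  by exists G; split => //; apply: subset_trans AW.
move: A fA Aa {AW}; apply: finI_ind.
  by move=> _; exists setT; split => //; exact: finI_setT.
move=> Ee C [n [Ob [oO ->]]] PC [Ea Ca].
have [G2 [fG2 G2a G2C]] := PC Ca.
suff [G1 [fG1 G1a G1E]] : exists G, [/\ finI_from (D0 Bs) id G, G a &
    G `<=` [set d | Ob (d n)]].
  exists (G1 `&` G2); split; [exact: finI_fromI|by split|].
  by move=> d [G1d G2d]; split; [exact: G1E|exact: G2C].
move: Ea => /=.
case E: (a n) => [y|x] Oan; first by case: (nY y).
have [U [K [oU Ux cK sO]]] := @nbhsX X Y phi x Ob (open_nbhs_nbhs (conj oO Oan)).
have [b [Bsb bx] bU] := BsB x U (open_nbhs_nbhs (conj oU Ux)).
exists (cylX n b); split.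
- by apply: finI_from1; exists n => //; right; exists b.
- by exists x.
move=> d [x' bx' e] /=; rewrite -e; apply: sO; apply/gX_br; exact: bU.
Qed.

Lemma part6 : hausdorff_space Y -> continuous phi ->
  @second_countable X -> hereditarily_separable PY -> hereditarily_separable PZ.
Proof.
move=> hY cphi [Bs cBs bBs] HSY A.
have cF : countable (finI_from (D0 Bs) id) by apply: finI_from_countable; exact: D0_countable.
have [[y0 _]|nY] := pselect (exists y : Y, True).
  have HDD : forall G : set PZ, exists DD : set PZ, [/\ DD `<=` A `&` G, countable DD &
      psi y0 @` (A `&` G) `<=` closure (psi y0 @` DD)].
    move=> G; have [D' [sD' cD' dD']] := HSY (psi y0 @` (A `&` G)).
    pose pre (w : PY) := xget ((fun _ => gY y0) : PZ) [set a : PZ | (A `&` G) a /\ psi y0 a = w].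
    have preP : forall w, D' w -> (A `&` G) (pre w) /\ psi y0 (pre w) = w.
      move=> w /sD' [a AGa e]; apply: (@xgetPex _ ((fun _ => gY y0) : PZ) [set a : PZ | (A `&` G) a /\ psi y0 a = w]).
      by exists a.
    exists (pre @` D'); split.
    - by move=> _ [w D'w <-]; exact: (preP w D'w).1.
    - exact: (card_le_trans (card_image_le _ _) cD').
    have -> : psi y0 @` (pre @` D') = D'.
      apply/seteqP; split => [_ [_ [w D'w <-] <-]|w D'w]; first by rewrite (preP w D'w).2.
      by exists (pre w); [exists w|exact: (preP w D'w).2].
    exact: dD'.
  have /choice [DDf HDf] := HDD.
  exists (\bigcup_(G in finI_from (D0 Bs) id) DDf G); split.
  - by move=> d [G _ DDd]; have [H1 _ _] := HDf G; case: (H1 d DDd).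
  - by apply: bigcup_countable cF _ => G _; have [_ H2 _] := HDf G.
  move=> a Aa W nW.
  have [G [fG Ga [N [nN HN]]]] := @key Bs y0 hY cphi bBs a W nW.
  have [HD1 _ HD3] := HDf G.
  have [_ [[d DDd <-] Nd]] := HD3 (psi y0 a) (ex_intro2 _ _ a (conj Aa Ga) erefl) N nN.
  exists d; split; first by exists G.
  by apply: HN => //; exact: (HD1 d DDd).2.
have nY' : Y -> False by move=> y; apply: nY; exists y.
have HDD : forall G : set PZ, exists DD : set PZ, [/\ DD `<=` A `&` G, countable DD &
    (A `&` G !=set0 -> DD !=set0)].
  move=> G; have [[a AGa]|nAG] := pselect (A `&` G !=set0).
    exists [set a]; split; [by move=> _ ->|exact: countable1|by exists a].
  by exists set0; split => //; exact: countable0.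
have /choice [DDf HDf] := HDD.
exists (\bigcup_(G in finI_from (D0 Bs) id) DDf G); split.
- by move=> d [G _ DDd]; have [H1 _ _] := HDf G; case: (H1 d DDd).
- by apply: bigcup_countable cF _ => G _; have [_ H2 _] := HDf G.
move=> a Aa W nW.
have [G [fG Ga GW]] := @key0 Bs nY' bBs a W nW.
have [HD1 _ HD3] := HDf G.
have [d DDd] := HD3 (ex_intro _ a (conj Aa Ga)).
exists d; split; first by exists G.
by apply: GW; exact: (HD1 d DDd).2.
Qed.
End P6.


Theorem lemma3p2 (X Y : topologicalType) (phi : Y -> X) :
  hausdorff_space X -> hausdorff_space Y -> continuous phi ->
  (* 1 *)
  ([/\ closed (range (glueX phi)), open (range (glueY phi)),
       (forall A : set X,
          open A <-> exists V : set (glue_type phi), open V /\ A = glueX phi @^-1` V) &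
       (forall A : set Y,
          open A <-> exists V : set (glue_type phi), open V /\ A = glueY phi @^-1` V)])
  /\
  (* 2 *)
  (locally_compact_space Y -> hausdorff_space (glue_type phi))
  /\
  (* 3 *)
  (compact [set: X] -> compact [set: glue_type phi])
  /\
  (* 4 *)
  (first_countable X -> first_countable Y -> compact [set: X] ->
   locally_compact_space Y -> (forall x : X, compact (phi @^-1` [set x])) ->
   first_countable (glue_type phi))
  /\
  (* 5 *)
  (zero_dim X -> zero_dim Y -> compact [set: X] -> locally_compact_space Y ->
   zero_dim (glue_type phi))
  /\
  (* 6 *)
  (@second_countable X -> hereditarily_separable (power_omega Y) ->
   hereditarily_separable (power_omega (glue_type phi))).
Proof.
move=> hX hY cphi.
split; first exact: (@part1 X Y phi hY cphi).
split; first exact: (@part2 X Y phi hX hY).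
split; first exact: (@part3 X Y phi hY cphi).
split; first by move=> fX fY _ lcY cF; exact: (@part4 X Y phi hX hY cphi fX fY lcY cF).
split; first by move=> zX zY _ lcY; exact: (@part5 X Y phi hX hY cphi zX zY lcY).
exact: (@part6 X Y phi hY cphi).
Qed.
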